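(* Let $R$ be an integral domain whose unit group contains an element different from $1$, and let $\varphi$ be an automorphism of $\overline{\mathbf{A}_4(R)}=\mathbf{A}_4(R)/\mathbf{U}_4(R)'$. Then there exist a permutation $\sigma$ of the set $\{(1,2),(2,3),(3,4)\}$ and automorphisms $\Phi_{1,2},\Phi_{2,3},\Phi_{3,4}$ of the additive group $(R,+)$ such that $\varphi(\bar e_{i,j}(r))=\bar e_{\sigma(i,j)}(\Phi_{i,j}(r))$ for all $(i,j)\in\{(1,2),(2,3),(3,4)\}$ and all $r\in R$.
   Context: $\mathbf{A}_4(R)$ is the group of upper triangular $4\times4$ matrices over $R$ with diagonal $(1,u_2,u_3,1)$, $u_2,u_3\in U(R)$; $\mathbf{U}_4(R)$ its subgroup of upper unitriangular matrices and $\mathbf{U}_4(R)'$ the commutator subgroup of $\mathbf{U}_4(R)$. For $i<j$ and $r\in R$, $e_{i,j}(r)$ is the unitriangular matrix with $(i,j)$-entry $r$ and all other off-diagonal entries $0$, and $\bar e_{i,j}(r)$ its image in $\overline{\mathbf{A}_4(R)}$; for a pair $(k,l)$ we write $\bar e_{(k,l)}=\bar e_{k,l}$. *)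

(* Defs.v *)
From HB Require Import structures.
From mathcomp Require Import all_boot all_order all_algebra all_fingroup.
Set Implicit Arguments. Unset Strict Implicit. Unset Printing Implicit Defensive.
Import GRing.Theory.
Local Open Scope ring_scope.

Section A4.
Variable R : idomainType.

(* Indices are 0-based: matrix entry (i,j) of the paper is entry (i-1,j-1). *)

Definition inA4 (M : 'M[R]_4) : Prop :=
  (forall i j : 'I_4, (j < i)%N -> M i j = 0) /\
  M (inord 0) (inord 0) = 1 /\ M (inord 3) (inord 3) = 1 /\
  M (inord 1) (inord 1) \is a GRing.unit /\ M (inord 2) (inord 2) \is a GRing.unit.

Definition inU4 (M : 'M[R]_4) : Prop :=
  (forall i j : 'I_4, (j < i)%N -> M i j = 0) /\ (forall i : 'I_4, M i i = 1).

Inductive inU4' : 'M[R]_4 -> Prop :=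
  | U4'_one : inU4' 1
  | U4'_comm x y : inU4 x -> inU4 y -> inU4' (x^-1 * y^-1 * x * y)
  | U4'_mul x y : inU4' x -> inU4' y -> inU4' (x * y)
  | U4'_inv x : inU4' x -> inU4' x^-1.

Definition congU (x y : 'M[R]_4) : Prop := inU4' (x^-1 * y).

(* A map on representatives inducing an automorphism of A_4(R)/U_4(R)'. *)
Definition quot_aut (phi : 'M[R]_4 -> 'M[R]_4) : Prop :=
  [/\ (forall x, inA4 x -> inA4 (phi x)),
      (forall x y, inA4 x -> inA4 y -> congU x y -> congU (phi x) (phi y)),
      (forall x y, inA4 x -> inA4 y -> congU (phi (x * y)) (phi x * phi y)),
      (forall x y, inA4 x -> inA4 y -> congU (phi x) (phi y) -> congU x y) &
      (forall y, inA4 y -> exists2 x, inA4 x & congU (phi x) y)].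

Definition elem (i j : 'I_4) (r : R) : 'M[R]_4 := 1%:M + r *: delta_mx i j.

(* k : 'I_3 encodes the pair (k+1,k+2) (1-based), i.e. (1,2),(2,3),(3,4). *)
Definition elem_k (k : 'I_3) (r : R) : 'M[R]_4 := elem (inord k) (inord k.+1) r.

Definition additive_aut (f : R -> R) : Prop :=
  (forall x y, f (x + y) = f x + f y) /\ bijective f.

End A4.

(* Main.v *)
Require Import Defs.
From HB Require Import structures.
From mathcomp Require Import all_boot all_order all_algebra all_fingroup.
From mathcomp Require Import ring.
From Stdlib Require Import Classical.
Set Implicit Arguments. Unset Strict Implicit. Unset Printing Implicit Defensive.
Import GRing.Theory.
Local Open Scope ring_scope.

Section Abs.
Variable R : idomainType.
Record co := Co {ca : R; cb : R; cx : R; cy : R; cz : R}.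
Definition valid p := ca p \is a GRing.unit /\ cb p \is a GRing.unit.
Definition cmul p q := Co (ca p * ca q) (cb p * cb q) (cx q + cx p * ca q)
  (ca p * cy q + cy p * cb q) (cb p * cz q + cz p).
Definition one := Co 1 1 0 0 0.
Lemma co_eq p q : ca p = ca q -> cb p = cb q -> cx p = cx q -> cy p = cy q -> cz p = cz q -> p = q.
Proof. by case: p; case: q => /= ? ? ? ? ? ? ? ? ? ? -> -> -> -> ->. Qed.
Lemma valid_mul p q : valid p -> valid q -> valid (cmul p q).
Proof. by case=> ? ? [? ?]; split; rewrite /= unitrM; apply/andP. Qed.
Lemma valid_one : valid one.
Proof. by split; exact: unitr1. Qed.
Lemma from_eq (x y d : R) : x = y -> d = x - y \/ d = y - x -> d = 0.
Proof. by move=> -> [] ->; rewrite subrr. Qed.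
Lemma sq0 (x : R) : x * x = 0 -> x = 0.
Proof. by move/eqP; rewrite mulf_eq0 orbb => /eqP. Qed.
Lemma idem p : valid p -> cmul p p = p -> p = one.
Proof.
case: p => a b x y z [/= ua ub] H.
have a1 : a = 1 by apply: (mulrI ua); rewrite mulr1; exact: (congr1 ca H).
have b1 : b = 1 by apply: (mulrI ub); rewrite mulr1; exact: (congr1 cb H).
have hx := congr1 cx H; have hy := congr1 cy H; have hz := congr1 cz H.
rewrite /= a1 b1 in hx hy hz *.
apply: co_eq => //=.
- by apply: (@addrI _ x); rewrite addr0 -{3}hx mulr1.
- by apply: (@addrI _ y); rewrite addr0 -{3}hy mul1r mulr1.
- by apply: (@addrI _ z); rewrite addr0 -{3}hz mul1r addrC.
Qed.

Ltac vt := repeat (apply: valid_mul); try assumption; try exact: valid_one.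
Ltac feq H := let H' := fresh in have H' := H; simpl in H'; apply: (from_eq H'); first [left; ring | right; ring].

Definition inN p := ca p = 1 /\ cb p = 1.
Definition comm p q := cmul p q = cmul q p.
Definition Q p := forall h h', valid h -> valid h' -> cmul h h' = one ->
  comm p (cmul (cmul h p) h').
Definition E0 r := Co 1 1 r 0 0.
Definition E1 r := Co 1 1 0 r 0.
Definition E2 r := Co 1 1 0 0 r.

Lemma comm_N p q : inN p -> inN q -> comm p q.
Proof.
case: p => a b x y z; case: q => a' b' x' y' z' [/= -> ->] [/= -> ->].
by apply: co_eq => /=; ring.
Qed.

Lemma validE (r : R) : valid (Co 1 1 r 0 0) /\ valid (Co 1 1 0 r 0) /\ valid (Co 1 1 0 0 r).
Proof. by do !split; exact: unitr1. Qed.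

Lemma N_of_Q p : valid p -> Q p -> inN p.
Proof.
case: p => a b x y z [/= ua ub] HQ.
have [v1 [v2 v3]] := validE 1; have [w1 [w2 w3]] := validE (-1).
have h0 := HQ _ _ v1 w1.
have h2 := HQ _ _ v3 w3.
have e0 : cmul (Co 1 1 1 0 0) (Co 1 1 (-1) 0 0) = one by apply: co_eq => /=; ring.
have e2 : cmul (Co 1 1 0 0 1) (Co 1 1 0 0 (-1)) = one by apply: co_eq => /=; ring.
move: h0 h2 => /(_ e0) h0 /(_ e2) h2.
have ea : (a - 1) * (a - 1) = 0 by feq (congr1 cx h0).
have eb : (b - 1) * (b - 1) = 0 by feq (congr1 cz h2).
by split; apply/eqP; rewrite -subr_eq0; apply/eqP; apply: sq0.
Qed.

Lemma Q_of_N p : inN p -> Q p.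
Proof.
move=> Np h h' vh vh' hh'; apply: comm_N => //.
case: Np; case: p => a b x y z /= -> ->.
by split; rewrite /= mulr1; [exact: (congr1 ca hh') | exact: (congr1 cb hh')].
Qed.

Variable u : R.
Hypothesis uU : u \is a GRing.unit.
Hypothesis u1 : u != 1.
Variable F : co -> co.
Hypothesis Fv : forall p, valid p -> valid (F p).
Hypothesis Fm : forall p q, valid p -> valid q -> F (cmul p q) = cmul (F p) (F q).
Hypothesis Fi : forall p q, valid p -> valid q -> F p = F q -> p = q.
Hypothesis Fs : forall q, valid q -> exists p, valid p /\ F p = q.

Lemma F1 : F one = one.
Proof.
have e : cmul one one = one by apply: co_eq => /=; ring.
apply: idem; first exact: Fv valid_one.
by rewrite -Fm ?e //; exact: valid_one.
Qed.

Lemma FQ p : valid p -> Q p -> Q (F p).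
Proof.
move=> vp HQ H H' vH vH'.
have [h [vh <-]] := Fs vH; have [h' [vh' <-]] := Fs vH' => HH'.
have hh' : cmul h h' = one.
  apply: Fi; [exact: valid_mul | exact: valid_one | by rewrite Fm // HH' F1].
have := HQ h h' vh vh' hh'; rewrite /comm => E.
by rewrite -!Fm ?E //; vt.
Qed.

Lemma QF p : valid p -> Q (F p) -> Q p.
Proof.
move=> vp HQ h h' vh vh' hh'.
have := HQ (F h) (F h') (Fv vh) (Fv vh') (ltac:(by rewrite -Fm // hh' F1)).
by rewrite /comm -!Fm //; try (apply: Fi); vt.
Qed.

Lemma NF p : valid p -> (inN p <-> inN (F p)).
Proof.
move=> vp; split => H.
  by apply: N_of_Q; [exact: Fv| apply: FQ => //; exact: Q_of_N].
by apply: N_of_Q => //; apply: QF => //; exact: Q_of_N.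
Qed.


Definition inX p := inN p /\ ((cy p = 0 /\ cz p = 0) \/ (cx p = 0 /\ cz p = 0) \/ (cx p = 0 /\ cy p = 0)).
Definition XU p := exists h, valid h /\ ~ inN h /\ comm p h.

Lemma XU_X p : inN p -> XU p -> inX p.
Proof.
case: p => a b x y z [/= -> ->] [[a' b' x' y' z'] [[/= ua ub] [nN c]]].
split => //=.
have ex : x * (a' - 1) = 0 by feq (congr1 cx c).
have ey : y * (b' - a') = 0 by feq (congr1 cy c).
have ez : z * (b' - 1) = 0 by feq (congr1 cz c).
have t1 (w d : R) : w * d = 0 -> w != 0 -> d = 0.
  by move=> h nw; move/eqP: h; rewrite mulf_eq0 (negbTE nw) => /eqP.
have t2 (d d' : R) : d - d' = 0 -> d = d'.
  by move=> /eqP; rewrite subr_eq0 => /eqP.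
have [x0|x0] := eqVneq x 0; have [y0|y0] := eqVneq y 0; have [z0|z0] := eqVneq z 0;
  try tauto; exfalso; apply: nN; rewrite /inN /=.
all: try have ha := t2 _ _ (t1 _ _ ex x0).
all: try have hb := t2 _ _ (t1 _ _ ez z0).
all: try have hab := t2 _ _ (t1 _ _ ey y0).
all: split.
all: first [ by rewrite ha | by rewrite -hab hb | by rewrite hb | by rewrite hab ha ].
Qed.

Lemma X_XU p : inX p -> XU p.
Proof.
have nu : u - 1 != 0 by rewrite subr_eq0.
case: p => a b x y z [[/= -> ->]] [[/= -> ->]|[[/= -> ->]|[/= -> ->]]].
- exists (Co 1 u 0 0 0); split; [split => //=; exact: unitr1|split].
    by case => _ /= /eqP; rewrite (negbTE u1).
  by apply: co_eq => /=; ring.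
- exists (Co u u 0 0 0); split; [split => //=|split].
    by case => /= /eqP; rewrite (negbTE u1).
  by apply: co_eq => /=; ring.
- exists (Co u 1 0 0 0); split; [split => //=; exact: unitr1|split].
    by case => /= /eqP; rewrite (negbTE u1).
  by apply: co_eq => /=; ring.
Qed.

Lemma XF p : valid p -> (inX p <-> inX (F p)).
Proof.
move=> vp; split => H.
- have Np : inN p by case: H.
  have NFp : inN (F p) by apply/(NF vp).
  apply: (XU_X NFp); have [h [vh [nh c]]] := X_XU H.
  exists (F h); split; first exact: Fv.
  split; first by move/(NF vh).
  by rewrite /comm -!Fm // c.
- have NFp : inN (F p) by case: H.
  have Np : inN p by apply/(NF vp).
  apply: (XU_X Np); have [H' [vH [nH c]]] := X_XU H.
  have [h [vh eh]] := Fs vH.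
  exists h; split => //; split; first by move/(NF vh); rewrite eh.
  by apply: Fi; try exact: valid_mul; rewrite !Fm // eh.
Qed.

Definition ck (k : 'I_3) p := match val k with 0 => cx p | 1 => cy p | _ => cz p end.
Definition Ek (k : 'I_3) r := match val k with 0 => E0 r | 1 => E1 r | _ => E2 r end.
Definition inXk (k : 'I_3) p := inN p /\ forall j : 'I_3, j != k -> ck j p = 0.
Definition o0 : 'I_3 := @Ordinal 3 0 isT.
Definition o1 : 'I_3 := @Ordinal 3 1 isT.
Definition o2 : 'I_3 := @Ordinal 3 2 isT.
Definition sel p : 'I_3 := if cx p != 0 then o0 else if cy p != 0 then o1 else o2.

Lemma ordcase (k : 'I_3) : k = o0 \/ k = o1 \/ k = o2.
Proof.
case: k => [[|[|[|?]]] hk]; [left|right;left|right;right|by []]; exact: val_inj.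
Qed.

Lemma inXkE k p : inXk k p <-> inN p /\ match val k with
  0 => cy p = 0 /\ cz p = 0 | 1 => cx p = 0 /\ cz p = 0 | _ => cx p = 0 /\ cy p = 0 end.
Proof.
rewrite /inXk; split=> [[Np h]|[Np h]]; split => //.
  move: h; case: (ordcase k) => [->|[->|->]] h.
  - by split; [exact: (h o1) | exact: (h o2)].
  - by split; [exact: (h o0) | exact: (h o2)].
  - by split; [exact: (h o0) | exact: (h o1)].
move=> j; move: h; case: (ordcase k) => [->|[->|->]] /= h; case: (ordcase j) => [->|[->|->]] //= _; tauto.
Qed.

Lemma selP p : inX p -> inXk (sel p) p.
Proof.
case=> Np H; apply/inXkE; split => //; rewrite /sel.
have [x0|x0] := eqVneq (cx p) 0; have [y0|y0] := eqVneq (cy p) 0; rewrite ?x0 ?y0 ?eqxx /=.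
all: case: H => [[h1 h2]|[[h1 h2]|[h1 h2]]]; try (split; by []).
all: first [by move: x0; rewrite h1 eqxx | by move: x0; rewrite h2 eqxx
  | by move: y0; rewrite h1 eqxx | by move: y0; rewrite h2 eqxx].
Qed.

Lemma Xk_X k p : inXk k p -> inX p.
Proof. case/inXkE => Np H; split => //; move: H; case: (ordcase k) => [->|[->|->]] /=; tauto. Qed.

Lemma Xk_eq k p : inXk k p -> p = Ek k (ck k p).
Proof.
case/inXkE; case: p => a b x y z [/= -> ->].
by case: (ordcase k) => [->|[->|->]] /= [-> ->].
Qed.

Lemma Ek0 k : Ek k 0 = one.
Proof. by case: (ordcase k) => [->|[->|->]]. Qed.
Lemma Ek_valid k r : valid (Ek k r).
Proof. by case: (ordcase k) => [->|[->|->]]; split; exact: unitr1. Qed.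
Lemma Ek_X k r : inXk k (Ek k r).
Proof. by apply/inXkE; case: (ordcase k) => [->|[->|->]]. Qed.
Lemma ck_Ek k r : ck k (Ek k r) = r.
Proof. by case: (ordcase k) => [->|[->|->]]. Qed.
Lemma Ek_add k r s : Ek k (r + s) = cmul (Ek k r) (Ek k s).
Proof. by case: (ordcase k) => [->|[->|->]]; apply: co_eq => /=; ring. Qed.
Lemma ck_one k : ck k one = 0.
Proof. by case: (ordcase k) => [->|[->|->]]. Qed.

Lemma Xk_nz k p : inXk k p -> p <> one -> ck k p != 0.
Proof. by move=> h; rewrite {1}(Xk_eq h); apply: contra_not_neq => ->; rewrite Ek0. Qed.

Lemma ck_mul k p q : inN p -> inN q -> ck k (cmul p q) = ck k p + ck k q.
Proof.
case: p => a b x y z; case: q => a' b' x' y' z' [/= -> ->] [/= -> ->].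
by case: (ordcase k) => [->|[->|->]]; rewrite /ck /=; ring.
Qed.

Lemma sep p q k j : inXk k p -> inXk j q -> ck k p != 0 -> ck j q != 0 -> k != j ->
  ~ inX (cmul p q).
Proof.
move=> hp hq nk nj kj hX.
have [Np Hp] := hp; have [Nq Hq] := hq.
have hs := selP hX.
have e1 : ck k (cmul p q) = ck k p by rewrite ck_mul // (Hq k kj) addr0.
have e2 : ck j (cmul p q) = ck j q by rewrite ck_mul // (Hp j) ?add0r // eq_sym.
have [_ Hs] := hs.
have [sk|sk] := eqVneq k (sel (cmul p q)).
  by move: nj; rewrite -e2 Hs ?eqxx // -sk eq_sym.
by move: nk; rewrite -e1 Hs ?eqxx.
Qed.

Lemma sameX p q k : inXk k p -> inXk k q -> inXk k (cmul p q).
Proof.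
move=> [Np Hp] [Nq Hq]; split.
  by case: Np Nq => h1 h2 [h3 h4]; split; rewrite /= ?h1 ?h2 ?h3 ?h4 mulr1.
by move=> j jk; rewrite ck_mul // Hp // Hq // addr0.
Qed.

Lemma Ek_ne_one k : Ek k 1 <> one.
Proof. by move/(congr1 (ck k)); rewrite ck_Ek ck_one => /eqP; rewrite oner_eq0. Qed.

Definition sigm k := sel (F (Ek k 1)).

Lemma F_ne_one p : valid p -> p <> one -> F p <> one.
Proof. by move=> vp np e; apply: np; apply: Fi => //; [exact: valid_one| rewrite F1]. Qed.

Lemma FX k r : inX (F (Ek k r)).
Proof. by apply/(XF (Ek_valid k r)); exact: Xk_X (Ek_X _ _). Qed.

Lemma sigP1 k : inXk (sigm k) (F (Ek k 1)) /\ ck (sigm k) (F (Ek k 1)) != 0.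
Proof.
have h := selP (FX k 1); split => //; apply: Xk_nz h _.
apply: F_ne_one; [exact: Ek_valid| exact: Ek_ne_one].
Qed.

Lemma key k r : inXk (sigm k) (F (Ek k r)).
Proof.
case: (classic (Ek k r = one)) => [e1|ne1].
  by rewrite e1 F1 -(Ek0 (sigm k)); exact: Ek_X.
have nq : F (Ek k r) <> one by apply: F_ne_one; [exact: Ek_valid| exact: ne1].
have hq := selP (FX k r).
have [e|js] := eqVneq (sel (F (Ek k r))) (sigm k); first by rewrite -e.
have [h1 n1] := sigP1 k.
exfalso; apply: (sep hq h1 (Xk_nz hq nq) n1 js).
by rewrite -Fm; [rewrite -Ek_add; exact: FX | exact: Ek_valid | exact: Ek_valid].
Qed.

Lemma sig_inj : injective sigm.
Proof.
move=> k j e; apply/eqP; apply/negP => /negP kj.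
have [h1 n1] := sigP1 k; have [h2 n2] := sigP1 j.
rewrite -e in h2 n2.
have : inX (F (cmul (Ek k 1) (Ek j 1))).
  by rewrite Fm; [exact: Xk_X (sameX h1 h2) | exact: Ek_valid | exact: Ek_valid].
move/(XF (valid_mul (Ek_valid k 1) (Ek_valid j 1))).
apply: (sep (Ek_X k 1) (Ek_X j 1)) => //; rewrite ck_Ek oner_eq0 //.
Qed.

Definition Phi k r := ck (sigm k) (F (Ek k r)).

Lemma FE k r : F (Ek k r) = Ek (sigm k) (Phi k r).
Proof. exact: Xk_eq (key k r). Qed.

Lemma Phi_add k r s : Phi k (r + s) = Phi k r + Phi k s.
Proof.
rewrite /Phi Ek_add Fm; try exact: Ek_valid.
by rewrite ck_mul //; [exact: (key k r).1 | exact: (key k s).1].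
Qed.

Lemma Phi_inj k : injective (Phi k).
Proof.
move=> r s e.
have : Ek k r = Ek k s by apply: Fi; [exact: Ek_valid|exact: Ek_valid|rewrite !FE e].
by move/(congr1 (ck k)); rewrite !ck_Ek.
Qed.

Lemma Phi_surj k t : exists r, Phi k r = t.
Proof.
have [p [vp ep]] := Fs (Ek_valid (sigm k) t).
have Xq : inX (F p) by rewrite ep; exact: Xk_X (Ek_X _ _).
have Xp : inX p by apply/(XF vp).
case: (classic (p = one)) => [p1|np].
  exists 0; rewrite /Phi Ek0 F1 ck_one.
  by move: ep; rewrite p1 F1 => /(congr1 (ck (sigm k))); rewrite ck_one ck_Ek.
have hp := selP Xp; set j := sel p in hp.
have ep' : p = Ek j (ck j p) := Xk_eq hp.
have nFp : F p <> one by apply: F_ne_one.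
have hk : inXk (sigm j) (F p) by rewrite ep'; exact: key.
have nz := Xk_nz hk nFp.
have sj : sigm j = sigm k.
  apply/eqP; apply/negP => /negP ne.
  move: nz; rewrite ep; have [_ H] := Ek_X (sigm k) t; by rewrite H ?eqxx.
have jk : j = k := sig_inj sj.
exists (ck j p); rewrite /Phi -jk -ep' ep jk ck_Ek //.
Qed.


Lemma abs_main : exists (s : 'I_3 -> 'I_3) (Ph : 'I_3 -> R -> R), injective s /\
  (forall k r t, Ph k (r + t) = Ph k r + Ph k t) /\ (forall k, injective (Ph k)) /\
  (forall k t, exists r, Ph k r = t) /\ (forall k r, F (Ek k r) = Ek (s k) (Ph k r)).
Proof.
exists sigm, Phi; split; first exact: sig_inj.
split; first exact: Phi_add.
split; first exact: Phi_inj.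
split; first exact: Phi_surj.
exact: FE.
Qed.
End Abs.


Section S.
Variable R : idomainType.
Implicit Types A B M : 'M[R]_4.
Definition e M (a b : nat) := M (@inord 3 a) (@inord 3 b).
Lemma sum4 (F : 'I_4 -> R) : \sum_(k < 4) F k = F (inord 0) + F (inord 1) + F (inord 2) + F (inord 3).
Proof.
rewrite !big_ord_recr big_ord0 /= add0r.
by congr (_ + _ + _ + _); congr F; apply/val_inj; rewrite /= inordK.
Qed.
Lemma mulE A B a b : e (A * B) a b = e A a 0 * e B 0 b + e A a 1 * e B 1 b + e A a 2 * e B 2 b + e A a 3 * e B 3 b.
Proof. by rewrite /e -mulmxE mxE sum4. Qed.
Lemma inord_eqE a b : (a < 4)%N -> (b < 4)%N -> (@inord 3 a == inord b) = (a == b).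
Proof. by move=> ha hb; rewrite -val_eqE /= !inordK. Qed.
Lemma e_elem i j r a b : (i < 4)%N -> (j < 4)%N -> (a < 4)%N -> (b < 4)%N ->
  e (elem (inord i) (inord j) r) a b = (a == b)%:R + r * ((a == i) && (b == j))%:R.
Proof. by move=> *; rewrite /e /elem !mxE !inord_eqE. Qed.
Lemma e_one a b : (a < 4)%N -> (b < 4)%N -> e 1 a b = (a == b)%:R.
Proof. by move=> *; rewrite /e !mxE inord_eqE. Qed.
Lemma mx_ext A B : (forall a b, (a < 4)%N -> (b < 4)%N -> e A a b = e B a b) -> A = B.
Proof.
move=> h; apply/matrixP=> i j; have := h i j (ltn_ord i) (ltn_ord j).
by rewrite /e !inord_val.
Qed.
Definition ut M := forall i j : 'I_4, (j < i)%N -> M i j = 0.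
Lemma ut_e M : ut M -> forall a b, (b < a)%N -> (a < 4)%N -> e M a b = 0.
Proof. by move=> h a b ba a4; apply: h; rewrite !inordK // (ltn_trans ba). Qed.
Lemma e_ut M : (forall a b, (b < a)%N -> (a < 4)%N -> e M a b = 0) -> ut M.
Proof. by move=> h i j ji; have := h i j ji (ltn_ord i); rewrite /e !inord_val. Qed.

Definition gmf (a b x y z p q t : R) (i j : nat) : R :=
  match i, j with
  | 0, 0 => 1 | 1, 1 => a | 2, 2 => b | 3, 3 => 1
  | 0, 1 => x | 1, 2 => y | 2, 3 => z
  | 0, 2 => p | 1, 3 => q | 0, 3 => t | _, _ => 0 end.
Definition gm a b x y z p q t : 'M[R]_4 := \matrix_(i, j) gmf a b x y z p q t i j.
Lemma e_gm a b x y z p q t i j : (i < 4)%N -> (j < 4)%N ->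
  e (gm a b x y z p q t) i j = gmf a b x y z p q t i j.
Proof. by move=> hi hj; rewrite /e mxE !inordK. Qed.

Lemma gm_mul a b x y z p q t a' b' x' y' z' p' q' t' :
  gm a b x y z p q t * gm a' b' x' y' z' p' q' t' =
  gm (a * a') (b * b') (x' + x * a') (a * y' + y * b') (b * z' + z)
     (p' + x * y' + p * b') (a * q' + y * z' + q) (t' + x * q' + p * z' + t).
Proof.
apply: mx_ext => i j hi hj; rewrite mulE !e_gm //.
by case: i hi => [|[|[|[|i]]]] hi //; case: j hj => [|[|[|[|j]]]] hj //=; ring.
Qed.

Lemma gm_one : gm 1 1 0 0 0 0 0 0 = 1.
Proof.
apply: mx_ext => i j hi hj; rewrite e_gm // e_one //.
by case: i hi => [|[|[|[|i]]]] hi //; case: j hj => [|[|[|[|j]]]] hj.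
Qed.

Lemma gm_congr a b x y z p q t a' b' x' y' z' p' q' t' :
  a = a' -> b = b' -> x = x' -> y = y' -> z = z' -> p = p' -> q = q' -> t = t' ->
  gm a b x y z p q t = gm a' b' x' y' z' p' q' t'.
Proof. by move=> -> -> -> -> -> -> -> ->. Qed.

Lemma inv_eq (A B : 'M[R]_4) : A * B = 1 -> A^-1 = B.
Proof.
move=> h; have h' : B * A = 1 by move: h; rewrite -!mulmxE; exact: mulmx1C.
have uA : A \is a GRing.unit by apply/unitrP; exists B.
by rewrite -[RHS](mulKr uA) h mulr1.
Qed.

Lemma gm_inv1 x y z p q t :
  (gm 1 1 x y z p q t)^-1 = gm 1 1 (-x) (-y) (-z) (-p + x * y) (-q + y * z)
     (-t + x * q - x * y * z + p * z).
Proof. by apply: inv_eq; rewrite gm_mul -gm_one; apply: gm_congr; ring. Qed.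

Lemma cancel0 (w v : R) : v \is a GRing.unit -> w * v = 0 -> w = 0.
Proof. by move=> hv h; rewrite -(mulrK hv w) h mul0r. Qed.

Lemma inA4E M : inA4 M <-> ut M /\ e M 0 0 = 1 /\ e M 3 3 = 1 /\
  e M 1 1 \is a GRing.unit /\ e M 2 2 \is a GRing.unit.
Proof. by []. Qed.

Lemma inA4_gm M : inA4 M -> M = gm (e M 1 1) (e M 2 2) (e M 0 1) (e M 1 2) (e M 2 3)
  (e M 0 2) (e M 1 3) (e M 0 3).
Proof.
case/inA4E => hu [h0 [h3 _]]; apply: mx_ext => i j hi hj; rewrite e_gm //.
case: i hi => [|[|[|[|i]]]] hi //; case: j hj => [|[|[|[|j]]]] hj //=;
  by rewrite ?h0 ?h3 // (ut_e hu).
Qed.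

Lemma gm_inA4 a b x y z p q t : a \is a GRing.unit -> b \is a GRing.unit ->
  inA4 (gm a b x y z p q t).
Proof.
move=> ua ub; apply/inA4E; rewrite !e_gm //; do !split => //.
apply: e_ut => i j ji hi; rewrite e_gm ?(ltn_trans ji) //.
by case: i hi ji => [|[|[|[|i]]]] hi //; case: j => [|[|[|[|j]]]].
Qed.

Lemma ut_inv M : ut M -> e M 0 0 \is a GRing.unit -> e M 1 1 \is a GRing.unit ->
  e M 2 2 \is a GRing.unit -> e M 3 3 \is a GRing.unit ->
  M \is a GRing.unit /\ ut M^-1.
Proof.
move=> hM u0 u1 u2 u3.
have uM : M \is a GRing.unit.
  suff : M \in unitmx by [].
  rewrite unitmxE -det_tr det_trig; last first.
    by apply/is_trig_mxP => i j ij; rewrite mxE; apply: hM.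
  apply: unitr_prod => i _; rewrite mxE -[i]inord_val.
  by case: i => [[|[|[|[|i]]]] hi].
split => //.
have hNM : M^-1 * M = 1 := mulVr uM.
have E a b : (a < 4)%N -> (b < 4)%N -> e M^-1 a 0 * e M 0 b + e M^-1 a 1 * e M 1 b +
  e M^-1 a 2 * e M 2 b + e M^-1 a 3 * e M 3 b = (a == b)%:R.
  by move=> ha hb; rewrite -mulE hNM e_one.
have z10 := ut_e hM (isT : (0 < 1)%N) isT; have z20 := ut_e hM (isT : (0 < 2)%N) isT.
have z30 := ut_e hM (isT : (0 < 3)%N) isT; have z21 := ut_e hM (isT : (1 < 2)%N) isT.
have z31 := ut_e hM (isT : (1 < 3)%N) isT; have z32 := ut_e hM (isT : (2 < 3)%N) isT.
have n10 : e M^-1 1 0 = 0.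
  by apply: (cancel0 u0); have := E 1 0 isT isT; rewrite z10 z20 z30 !mulr0 !addr0.
have n20 : e M^-1 2 0 = 0.
  by apply: (cancel0 u0); have := E 2 0 isT isT; rewrite z10 z20 z30 !mulr0 !addr0.
have n30 : e M^-1 3 0 = 0.
  by apply: (cancel0 u0); have := E 3 0 isT isT; rewrite z10 z20 z30 !mulr0 !addr0.
have n21 : e M^-1 2 1 = 0.
  by apply: (cancel0 u1); have := E 2 1 isT isT; rewrite n20 z21 z31 !mulr0 mul0r !addr0 add0r.
have n31 : e M^-1 3 1 = 0.
  by apply: (cancel0 u1); have := E 3 1 isT isT; rewrite n30 z21 z31 !mulr0 mul0r !addr0 add0r.
have n32 : e M^-1 3 2 = 0.
  by apply: (cancel0 u2); have := E 3 2 isT isT; rewrite n30 n31 z32 !mulr0 !mul0r !addr0 !add0r.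
apply: e_ut => i j ji hi.
by case: i hi ji => [|[|[|[|i]]]] hi //; case: j => [|[|[|[|j]]]].
Qed.

Lemma gm_inU4 x y z p q t : inU4 (gm 1 1 x y z p q t).
Proof.
have [hu _] := gm_inA4 x y z p q t (unitr1 R) (unitr1 R).
split => // i; rewrite -[i]inord_val; case: i => [[|[|[|[|i]]]] hi] //;
  by rewrite -/(e _ _ _) e_gm.
Qed.

Lemma inU4_gm M : inU4 M -> M = gm 1 1 (e M 0 1) (e M 1 2) (e M 2 3)
  (e M 0 2) (e M 1 3) (e M 0 3).
Proof.
case=> hu hd; have h : inA4 M.
  by apply/inA4E; rewrite /e !hd; do !split => //; exact: unitr1.
by rewrite {1}(inA4_gm h) /e !hd.
Qed.

Definition Kp z := exists p q t, z = gm 1 1 0 0 0 p q t.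
Lemma Kp_gm a b x y z p q t : a = 1 -> b = 1 -> x = 0 -> y = 0 -> z = 0 ->
  Kp (gm a b x y z p q t).
Proof. by move=> -> -> -> -> ->; exists p, q, t. Qed.

Lemma inU4'_K z : inU4' z -> Kp z.
Proof.
elim=> {z}.
- by exists 0, 0, 0; rewrite gm_one.
- move=> x y /inU4_gm -> /inU4_gm ->.
  by rewrite !gm_inv1 !gm_mul; apply: Kp_gm; ring.
- move=> x y _ [p [q [t ->]]] _ [p' [q' [t' ->]]].
  by rewrite gm_mul; apply: Kp_gm; ring.
- move=> x _ [p [q [t ->]]].
  by rewrite gm_inv1; apply: Kp_gm; ring.
Qed.

Definition comt (x y : 'M[R]_4) := x^-1 * y^-1 * x * y.

Lemma K_inU4' p q t : inU4' (gm 1 1 0 0 0 p q t).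
Proof.
have -> : gm 1 1 0 0 0 p q t = comt (gm 1 1 1 0 0 0 0 0) (gm 1 1 0 p 0 0 0 0) *
  comt (gm 1 1 0 1 0 0 0 0) (gm 1 1 0 0 q 0 0 0) *
  comt (gm 1 1 1 0 0 0 0 0) (gm 1 1 0 0 0 0 t 0).
  by rewrite /comt !gm_inv1 !gm_mul; apply: gm_congr; ring.
by apply: U4'_mul; [apply: U4'_mul|]; apply: U4'_comm; exact: gm_inU4.
Qed.

Definition c M : co R := Co (e M 1 1) (e M 2 2) (e M 0 1) (e M 1 2) (e M 2 3).
Definition mk (p : co R) := gm (ca p) (cb p) (cx p) (cy p) (cz p) 0 0 0.
Lemma c_gm a b x y z p q t : c (gm a b x y z p q t) = Co a b x y z.
Proof. by rewrite /c !e_gm. Qed.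
Lemma c_mk p : c (mk p) = p.
Proof. by case: p => a b x y z; rewrite /mk c_gm. Qed.
Lemma mk_inA4 p : valid p -> inA4 (mk p).
Proof. by case=> ? ?; apply: gm_inA4. Qed.
Lemma c_valid M : inA4 M -> valid (c M).
Proof. by case/inA4E => _ [_ [_ [? ?]]]; split. Qed.

Lemma mulA4 (x y : 'M[R]_4) : inA4 x -> inA4 y -> inA4 (x * y) /\ c (x * y) = cmul (c x) (c y).
Proof.
move=> hx hy; have [ux1 ux2] := c_valid hx; have [uy1 uy2] := c_valid hy.
rewrite /= in ux1 ux2 uy1 uy2.
rewrite (inA4_gm hx) (inA4_gm hy) gm_mul !c_gm; split => //.
by apply: gm_inA4; rewrite unitrM; apply/andP.
Qed.

Lemma utz M : ut M -> e M 1 0 = 0 /\ e M 2 0 = 0 /\ e M 3 0 = 0 /\ e M 2 1 = 0 /\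
  e M 3 1 = 0 /\ e M 3 2 = 0.
Proof. by move=> h; do !split; apply: ut_e. Qed.

Lemma diag_ut A B a : ut A -> ut B -> (a < 4)%N -> e (A * B) a a = e A a a * e B a a.
Proof.
move=> hA hB ha; rewrite mulE.
case: (utz hA) => a1 [a2 [a3 [a4 [a5 a6]]]]; case: (utz hB) => b1 [b2 [b3 [b4 [b5 b6]]]].
case: a ha => [|[|[|[|a]]]] ha //;
  rewrite ?a1 ?a2 ?a3 ?a4 ?a5 ?a6 ?b1 ?b2 ?b3 ?b4 ?b5 ?b6 ?mulr0 ?mul0r ?addr0 ?add0r //.
Qed.

Lemma inv_A4 (x : 'M[R]_4) : inA4 x -> x \is a GRing.unit /\ inA4 x^-1.
Proof.
move=> hx; have [hu [h0 [h3 [u1 u2]]]] := hx.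
have [ux hi] := ut_inv hu (ltac:(by rewrite /e h0 unitr1)) u1 u2
  (ltac:(by rewrite /e h3 unitr1)).
split => //.
have hNM : x^-1 * x = 1 := mulVr ux.
have D a : (a < 4)%N -> e x^-1 a a * e x a a = 1.
  by move=> ha; rewrite -diag_ut // hNM e_one // eqxx.
apply/inA4E; split => //; split; first by have := D 0 isT; rewrite -/(e x 0 0) /e h0 mulr1.
split; first by have := D 3 isT; rewrite /e h3 mulr1.
by split; apply/unitrPr; [exists (e x 1 1) | exists (e x 2 2)]; rewrite ?D.
Qed.

Lemma cmul_one (p : co R) : cmul p (one R) = p.
Proof. by case: p => a b x y z; apply: co_eq => /=; ring. Qed.

Lemma congU_c (x y : 'M[R]_4) : inA4 x -> inA4 y -> (congU x y <-> c x = c y).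
Proof.
move=> hx hy; have [ux hxi] := inv_A4 hx; split.
- move/inU4'_K => [p [q [t E]]].
  have -> : y = x * gm 1 1 0 0 0 p q t by rewrite -E mulVKr.
  by rewrite (mulA4 hx (gm_inA4 0 0 0 p q t (unitr1 R) (unitr1 R))).2 c_gm cmul_one.
- move=> hc; rewrite /congU.
  have [hz hcz] := mulA4 hxi hy.
  have : c (x^-1 * y) = one R.
    by rewrite hcz -hc -(mulA4 hxi hx).2 mulVr // -gm_one c_gm.
  move=> E; rewrite (inA4_gm hz).
  move: (congr1 (@ca R) E) (congr1 (@cb R) E) (congr1 (@cx R) E) (congr1 (@cy R) E)
    (congr1 (@cz R) E) => /= -> -> -> -> ->.
  exact: K_inU4'.
Qed.

Lemma elem_gm k r : elem_k k r = mk (Ek k r).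
Proof.
apply: mx_ext => i j hi hj; rewrite /elem_k /mk.
case: (ordcase k) => [->|[->|->]]; rewrite e_elem // e_gm //=;
by case: i hi => [|[|[|[|i]]]] hi //; case: j hj => [|[|[|[|j]]]] hj //=;
  rewrite ?mulr0 ?mulr1 ?addr0 ?add0r.
Qed.
End S.

Theorem mainTheorem11 (R : idomainType)
  (hu : exists u : R, u \is a GRing.unit /\ u != 1)
  (phi : 'M[R]_4 -> 'M[R]_4) (hphi : quot_aut phi) :
  exists (s : {perm 'I_3}) (Phi : 'I_3 -> R -> R),
    (forall k, additive_aut (Phi k)) /\
    (forall (k : 'I_3) (r : R), congU (phi (elem_k k r)) (elem_k (s k) (Phi k r))).
Proof.
case: hu => u [uU u1]; case: hphi => A1 A2 A3 A4 A5.
pose F p := c (phi (mk p)).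
have Fv : forall p, valid p -> valid (F p).
  by move=> p vp; apply: c_valid; apply: A1; exact: mk_inA4.
have Fm : forall p q, valid p -> valid q -> F (cmul p q) = cmul (F p) (F q).
  move=> p q vp vq; have hp := mk_inA4 vp; have hq := mk_inA4 vq.
  have [hpq cpq] := mulA4 hp hq.
  have hm := mk_inA4 (valid_mul vp vq).
  have e1 : congU (mk (cmul p q)) (mk p * mk q).
    by apply/(congU_c hm hpq); rewrite cpq !c_mk.
  have e2 := A2 _ _ hm hpq e1.
  have e3 := A3 _ _ hp hq.
  have [hpp cpp] := mulA4 (A1 _ hp) (A1 _ hq).
  rewrite /F ((congU_c (A1 _ hm) (A1 _ hpq)).1 e2).
  by rewrite ((congU_c (A1 _ hpq) hpp).1 e3) cpp.
have Fi : forall p q, valid p -> valid q -> F p = F q -> p = q.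
  move=> p q vp vq e; have hp := mk_inA4 vp; have hq := mk_inA4 vq.
  have := (congU_c (A1 _ hp) (A1 _ hq)).2 e.
  by move/(A4 _ _ hp hq)/(congU_c hp hq).1; rewrite !c_mk.
have Fs : forall q, valid q -> exists p, valid p /\ F p = q.
  move=> q vq; have [x hx ex] := A5 _ (mk_inA4 vq).
  exists (c x); split; first exact: c_valid.
  have hm := mk_inA4 (c_valid hx).
  have e1 : congU (mk (c x)) x by apply/(congU_c hm hx); rewrite c_mk.
  have e2 := A2 _ _ hm hx e1.
  rewrite /F ((congU_c (A1 _ hm) (A1 _ hx)).1 e2).
  by rewrite ((congU_c (A1 _ hx) (mk_inA4 vq)).1 ex) c_mk.
have [s [Ph [si [Pa [Pi [Ps FE]]]]]] := abs_main uU u1 Fv Fm Fi Fs.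
have Ps' k t : (exists r, Ph k r == t) by case: (Ps k t) => r <-; exists r.
exists (perm si), Ph; split.
  move=> k; split; first exact: Pa.
  exists (fun t => xchoose (Ps' k t)).
    by move=> r; apply: Pi; exact: (eqP (xchooseP (Ps' k (Ph k r)))).
  by move=> t; exact: (eqP (xchooseP (Ps' k t))).
move=> k r; rewrite permE.
have h1 := mk_inA4 (Ek_valid k r).
have h2 := mk_inA4 (Ek_valid (s k) (Ph k r)).
rewrite !elem_gm; apply/(congU_c (A1 _ h1) h2).
by rewrite c_mk -FE.
Qed.
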